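(* Let $N,\ell,k$ be integers with $1\le\ell<k\le N$, and let $\phi_k:S_{N,k}\to S_{N,k-\ell}$ be the truncation $\langle\pi(1),\dots,\pi(k)\rangle\mapsto\langle\pi(1),\dots,\pi(k-\ell)\rangle$. For every $\pi\in S_{N,k}$, the number of distinct subpermutations $\phi_k(\sigma)$, as $\sigma$ ranges over the neighbours of $\pi$ in $\mathcal U_{N,\ell,k}$, is at most $(2\ell+1)^k$.
   Context: $[N]=\{1,\dots,N\}$, $S_N$ is the set of permutations of $[N]$. For $\pi,\sigma\in S_N$, $\delta(\pi,\sigma)=\max_{i\in[N]}|\pi^{-1}(i)-\sigma^{-1}(i)|$. For $1\le k\le N$, $S_{N,k}$ is the set of injective maps $[k]\to[N]$; a permutation $\pi'\in S_N$ extends $\pi\in S_{N,k}$ if $\pi'(i)=\pi(i)$ for all $i\in[k]$. For $\pi,\sigma\in S_{N,k}$, $\delta(\pi,\sigma)=\min\{\delta(\pi',\sigma'):\pi',\sigma'\in S_N$ extending $\pi,\sigma$ respectively$\}$. The $k$-restricted uncertainty graph $\mathcal U_{N,\ell,k}$ has vertex set $S_{N,k}$, with $\pi\sim\sigma$ iff $\pi(1)\ne\sigma(1)$ and $\delta(\pi,\sigma)\le\ell$. *)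

(* Defs.v *)
(* [N] is modelled by 'I_N (0-based; distances are shift-invariant). *)
From HB Require Import structures.
From mathcomp Require Import all_boot all_order all_fingroup.
Set Implicit Arguments. Unset Strict Implicit. Unset Printing Implicit Defensive.

Definition distn (m n : nat) : nat := (m - n) + (n - m).

Definition delta_perm (N : nat) (p s : {perm 'I_N}) : nat :=
  \max_(i : 'I_N) distn ((p^-1)%g i) ((s^-1)%g i).

(* Elements of S_{N,k}: injective maps [k] -> [N], as finite functions
   (injectivity is imposed separately by [injectiveb]). *)
Definition partperm (N k : nat) := {ffun 'I_k -> 'I_N}.

Definition extends (N k : nat) (p : {perm 'I_N}) (pi : partperm N k) : bool :=
  [forall i : 'I_k, forall j : 'I_N, (val j == val i) ==> (p j == pi i)].

(* delta for partial permutations: min over extensions (default N is never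
   attained when k <= N, since extensions exist and all distances are < N). *)
Definition delta_part (N k : nat) (pi sg : partperm N k) : nat :=
  \big[minn/N]_(p : {perm 'I_N} | extends p pi)
    \big[minn/N]_(s : {perm 'I_N} | extends s sg) delta_perm p s.

(* adjacency in U_{N,l,k}; pi(1) is pi at index 0 *)
Definition uadj (N l k : nat) (k_gt0 : 0 < k) (pi sg : partperm N k) : bool :=
  (pi (Ordinal k_gt0) != sg (Ordinal k_gt0)) && (delta_part pi sg <= l).

Definition unbrs (N l k : nat) (k_gt0 : 0 < k) (pi : partperm N k) : {set partperm N k} :=
  [set sg : partperm N k | injectiveb sg && uadj l k_gt0 pi sg].

Definition trunc (N l k : nat) (sg : partperm N k) : partperm N (k - l) :=
  [ffun i : 'I_(k - l) => sg (widen_ord (leq_subr l k) i)].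

(* Main.v *)
Require Import Defs.
From HB Require Import structures.
From mathcomp Require Import all_boot all_order all_fingroup.
From mathcomp Require Import zify.

Lemma bigmin_witness (I : finType) (P : pred I) (F : I -> nat) {N l : nat} :
  l < N -> \big[minn/N]_(x | P x) F x <= l -> exists2 x, P x & F x <= l.
Proof.
move=> lN H.
case: (boolP [exists x, P x && (F x <= l)]) => [/existsP [x /andP [Px Fx]]|].
  by exists x.
move/existsPn=> Hn; exfalso.
have : l < \big[minn/N]_(x | P x) F x.
  apply: (big_ind (fun m => l < m)) => //.
    by move=> a b Ha Hb; rewrite leq_min Ha Hb.
  by move=> x Px; move: (Hn x); rewrite Px /= ltnNge => ->.
by rewrite ltnNge H.
Qed.

Theorem mainTheorem7 (N l k : nat) (hl : 1 <= l) (hlk : l < k) (hkN : k <= N)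
  (pi : partperm N k) (hpi : injectiveb pi) :
  #|[set trunc l sg | sg in unbrs l (leq_ltn_trans (leq0n l) hlk) pi]|
    <= (2 * l + 1) ^ k.
Proof.
set kp := leq_ltn_trans (leq0n l) hlk.
pose piN (n : nat) : 'I_N := pi (insubd (Ordinal kp) n).
have d0 : 0 < 2 * l + 1 by rewrite addn1.
pose Q (sg : partperm N k) (i : 'I_(k - l)) (d : 'I_(2 * l + 1)) :=
  trunc l sg i == piN (i + d - l).
pose F (f : {ffun 'I_(k - l) -> 'I_(2 * l + 1)}) : partperm N (k - l) :=
  [ffun i : 'I_(k - l) => piN (i + f i - l)].
have key : forall sg, sg \in unbrs l kp pi -> forall i, exists d, Q sg i d.
  move=> sg; rewrite inE => /andP [_ /andP [_ Hd]] i.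
  have lN : l < N by apply: leq_trans hlk hkN.
  have [p extp Hp] := bigmin_witness _ _ _ lN Hd.
  have [s exts Hps] := bigmin_witness _ _ _ lN Hp.
  have ik : i < k by have := ltn_ord i; lia.
  have iN : i < N by lia.
  set jN : 'I_N := Ordinal iN.
  set v := sg (widen_ord (leq_subr l k) i).
  have sv : s jN = v.
    have H1 := forallP exts (widen_ord (leq_subr l k) i).
    have H2 := implyP (forallP H1 jN) (eqxx _).
    exact/eqP.
  have sinv : (s^-1)%g v = jN by rewrite -sv permK.
  have Hdist : distn ((p^-1)%g v) ((s^-1)%g v) <= l.
    apply: (leq_trans _ Hps); rewrite /delta_perm; exact: leq_bigmax.
  rewrite sinv /distn /= in Hdist.
  set m := (p^-1)%g v in Hdist.
  have il : i < k - l := ltn_ord i.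
  have mk : m < k by lia.
  have dl : m + l - i < 2 * l + 1 by lia.
  exists (Ordinal dl); rewrite /Q /= /trunc ffunE -/v /piN.
  have -> : i + (m + l - i) - l = m by lia.
  set mo := insubd (Ordinal kp) m.
  have vmo : val mo = m by rewrite /mo insubdK.
  have H1 := forallP extp mo.
  have H2 := implyP (forallP H1 ((p^-1)%g v)).
  rewrite vmo eqxx /m permKV in H2.
  by rewrite (eqP (H2 isT)).
apply: (@leq_trans #|[set F f | f in [set: {ffun 'I_(k - l) -> 'I_(2 * l + 1)}]]|).
  apply: subset_leq_card; apply/subsetP => t /imsetP [sg Hsg ->].
  have Hk := key sg Hsg.
  apply/imsetP.
  exists [ffun i => odflt (Ordinal d0) [pick d | Q sg i d]]; first by rewrite inE.
  apply/ffunP => i; rewrite /F.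
  rewrite !ffunE; case: (pickP (Q sg i)) => [d|Hn]; first by rewrite /Q /trunc ffunE => /eqP.
  by have [d1 Hd1] := Hk i; move: (Hn d1); rewrite Hd1.
apply: leq_trans (leq_imset_card _ _) _.
rewrite cardsT card_ffun !card_ord.
by apply: leq_pexp2l => //; apply: leq_subr.
Qed.
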